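(* For integers $n\ge 1$ and $t\ge 1$ let $c_n(-2,t)=(-1)^{n+t}\frac{2n}{n+t}\binom{n+t}{2t}$ (an integer). Then: (1) if $s\geq 1$, $J\geq 1$, and $n\geq 0$ is even, then $c_n(-2,2^sJ-1)\equiv 0\pmod{2^{s+1}}$; (2) if $J\geq 0$ and $n\not\equiv 13,14\pmod{27}$, then $c_n(-2,27J+13)\equiv 0\pmod 3$; (3) if $J\geq 1$ and $n\not\equiv \pm1\pmod{27}$, then $c_n(-2,27J-1)\equiv 0\pmod 3$.
   Context: In (1), for $n=0$ the formula gives $c_0(-2,t)=0$. Binomial coefficients $\binom{m}{k}$ with $k>m$ are $0$. *)

(* Defs.v *)
From mathcomp Require Import all_boot all_order all_algebra.
Set Implicit Arguments. Unset Strict Implicit. Unset Printing Implicit Defensive.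
Import Order.TTheory GRing.Theory Num.Theory.
Local Open Scope ring_scope.

(* c_n(-2,t) = (-1)^(n+t) * (2n/(n+t)) * binom(n+t, 2t), computed in rat
   (for n = 0 this is 0; 'C(m,k) = 0 for k > m). *)
Definition cm2 (n t : nat) : rat :=
  (-1) ^+ (n + t) * ((2 * n)%:R / (n + t)%:R) * ('C(n + t, 2 * t))%:R.

Definition rat_cong0 (x : rat) (m : nat) : Prop :=
  exists k : int, x = (m%:Z * k)%:~R.

(* Main.v *)
Require Import Defs.
From mathcomp Require Import all_boot all_order all_algebra.
From mathcomp Require Import zify.
Import Order.TTheory GRing.Theory Num.Theory.
Set Implicit Arguments. Unset Strict Implicit. Unset Printing Implicit Defensive.

Lemma binom_block p e m k : prime p -> m %% p ^ e < k %% p ^ e -> p %| 'C(m, k).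
Proof.
move=> pp hlt; set q := p ^ e in hlt *.
have q0 : 0 < q by rewrite expn_gt0 prime_gt0.
rewrite (divn_eq m q) -binomial.Vandermonde; apply: dvdn_sum => [[j /= hj]] _.
case: (boolP (q %| j)) => hq.
  rewrite [X in _ * X]bin_small ?muln0 //.
  case/dvdnP: hq => j' hj'.
  have hk : k = j' * q + (k - j) by rewrite hj' in hj *; rewrite subnKC // -ltnS.
  have : k %% q = (k - j) %% q by rewrite {1}hk modnMDl.
  move=> e1. apply: (leq_trans hlt); rewrite e1; exact: leq_mod.
apply: dvdn_mulr.
have jpos : 0 < j by case: j hj hq => //; rewrite dvdn0.
have e0 : 0 < e by move: hq; rewrite /q; case: (e) => //; rewrite expn0 dvd1n.
apply/negPn/negP => hnd.
have cop : coprime q ('C(m %/ q * q, j)) by rewrite coprime_pexpl // prime_coprime.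
move/negP: hq; apply.
have := mul_bin_diag (m %/ q * q) j.-1; rewrite prednK // => H.
rewrite -(Gauss_dvdl _ cop) -H; apply: dvdn_mulr; apply: dvdn_mull; exact: dvdnn.
Qed.
Definition cc n T := 'C(n + T, 2 * T.+1) + 'C(n + T.+1, 2 * T.+1).

Lemma ccN n T : (n + T.+1) * cc n T = 2 * n * 'C(n + T.+1, 2 * T.+1).
Proof.
rewrite /cc mulnDr.
have := mul_bin_down (n + T.+1) (2 * T.+1); rewrite addnS /= => ->.
rewrite -mulnDl. case: (leqP (2 * T.+1) (n + T.+1)) => h.
  by have -> : (n + T).+1 - 2 * T.+1 + (n + T).+1 = 2 * n by lia.
by rewrite bin_small ?muln0 // -addnS.
Qed.

Lemma ccA n T : T.+1 * cc n T = n * 'C(n + T, (2 * T).+1).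
Proof.
apply/eqP; rewrite -(eqn_pmul2l (_ : 0 < n + T.+1)) ?addnS //; apply/eqP.
rewrite mulnCA -addnS ccN.
have := mul_bin_diag (n + T.+1) (2 * T).+1; rewrite addnS /= => H.
rewrite [RHS]mulnCA H (_ : 2 * T.+1 = (2 * T).+2); last by lia.
set C := binomial _ _. nia.
Qed.


Lemma alg N t n w a b d X c : 0 < t -> N.+1 * b = (2 * t).+2 * a ->
  N * d = (2 * t).+1 * b -> 2 * t * d = w * X -> t * c = n * X ->
  N.+1 * N * w * c = 2 * (2 * t).+2 * (2 * t).+1 * n * a.
Proof.
move=> tp e1 e2 e3 e4; apply/eqP; rewrite -(eqn_pmul2l tp); apply/eqP.
transitivity (N.+1 * N * w * (t * c)); first by nia.
rewrite e4.
transitivity (N.+1 * N * n * (w * X)); first by nia.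
rewrite -e3.
transitivity (2 * t * n * N.+1 * (N * d)); first by nia.
rewrite e2.
transitivity (2 * t * n * (2 * t).+1 * (N.+1 * b)); first by nia.
rewrite e1; nia.
Qed.

Lemma ccB n T : let N := n + T.+1 in
  N.+1 * N * (n - T.+1) * cc n T =
  2 * (2 * T.+1).+2 * (2 * T.+1).+1 * n * 'C(N.+1, (2 * T.+1).+2).
Proof.
move=> N; apply: (alg (b := 'C(N, (2 * T.+1).+1)) (d := 'C(n + T, 2 * T.+1))
   (X := 'C(n + T, (2 * T).+1))) => //.
- exact: mul_bin_diag.
- by have := mul_bin_diag N (2 * T.+1); rewrite /N addnS.
- have := mul_bin_left (n + T) (2 * T).+1.
  rewrite (_ : (2 * T).+2 = 2 * T.+1); last by lia.
  by rewrite (_ : n + T - (2 * T).+1 = n - T.+1); last by lia.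
- exact: ccA.
Qed.


Lemma part2 J n : n %% 27 != 13 -> n %% 27 != 14 -> 3 %| cc n (27 * J + 12).
Proof.
move=> h1 h2; rewrite /cc; apply: dvdn_add; apply: (@binom_block 3 3) => //;
  rewrite (_ : 3 ^ 3 = 27) //; lia.
Qed.

Lemma part3 J n : 1 <= J -> n %% 27 != 1 -> n %% 27 != 26 ->
  3 %| cc n (27 * J - 2).
Proof.
move=> hJ h1 h2; case: (boolP (3 %| n)) => h3.
  have := ccA n (27 * J - 2) => H.
  rewrite -(@Gauss_dvdr 3 (27 * J - 2).+1) ?H ?dvdn_mulr //.
  rewrite prime_coprime //; lia.
rewrite /cc; apply: dvdn_add; apply: (@binom_block 3 3) => //;
  rewrite (_ : 3 ^ 3 = 27) //; lia.
Qed.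


Lemma part1 s J n : 1 <= s -> 1 <= J -> ~~ odd n ->
  2 ^ s.+1 %| cc n (2 ^ s * J - 2).
Proof.
move=> hs hJ hn.
case: s hs => // s' _.
set T := 2 ^ s'.+1 * J - 2.
have P0 : 0 < 2 ^ s' by rewrite expn_gt0.
have hT : T.+2 = 2 * (2 ^ s' * J).
  rewrite /T expnS -mulnA; have : 0 < 2 ^ s' * J by rewrite muln_gt0 P0.
  lia.
have oT : odd T.+1.
  have : ~~ odd T.+2 by rewrite hT oddM.
  by rewrite oddS negbK.
case: (leqP n T) => hnT.
  rewrite /cc !bin_small ?dvdn0 //; lia.
have hnT' : T.+1 < n.
  rewrite ltn_neqAle hnT andbT; apply/eqP => e; move: oT; rewrite e.
  by move/negbTE: hn => ->.
set s := s'.+1.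
case: (boolP (2 ^ s %| n)) => hsn.
  have X2 : 2 %| 'C(n + T, (2 * T).+1).
    have := mul_bin_diag (n + T) (2 * T) => H.
    rewrite -(@Gauss_dvdr 2 (2 * T).+1); last by rewrite coprime2n /= oddM.
    rewrite -H dvdn_mulr // dvdn2 oddD negb_add (negbTE hn).
    by move: oT; rewrite oddS; case: (odd T).
  rewrite -(@Gauss_dvdr _ T.+1); last by rewrite coprime_pexpl // coprime2n.
  by rewrite ccA expnS mulnC dvdn_mul.
have n0 : 0 < n by case: (n) hsn => //; rewrite dvdn0.
case: (pfactor_coprime (isT : prime 2) n0) => a ca.
move: (logn 2 n) => v ha.
have vs : v < s.
  rewrite ltnNge; apply/negP => h; move/negP: hsn; apply.
  by rewrite ha dvdn_mull // dvdn_exp2l.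
have oa : odd a by rewrite -coprime2n.
move: (erefl (a + 2 ^ (s - v) * J)); move: {2}(a + 2 ^ (s - v) * J) => b eb.
have ob : odd b.
  rewrite -eb oddD oa oddM oddX.
  by rewrite (_ : (s - v == 0) = false) //; apply/negbTE; rewrite subn_eq0 -ltnNge.
have eN : (n + T.+1).+1 = 2 ^ v * b.
  have e2 : 2 ^ s = 2 ^ v * 2 ^ (s - v) by rewrite -expnD subnKC // ltnW.
  rewrite -addnS hT mulnA -expnS -/s e2 -eb mulnDr mulnA.
  by rewrite ha mulnC.
have oN : odd (n + T.+1) by rewrite oddD (negbTE hn) oT.
have ow : odd (n - T.+1).
  by rewrite (oddB (ltnW hnT')) (negbTE hn) oT.
have := ccB n T => /= H.
have H2 : b * (n + T.+1) * (n - T.+1) * cc n T =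
   2 * (2 * T.+1).+2 * (2 * T.+1).+1 * a * 'C((n + T.+1).+1, (2 * T.+1).+2).
  apply/eqP; rewrite -(@eqn_pmul2l (2 ^ v)) ?expn_gt0 //; apply/eqP.
  rewrite !mulnA -eN H ha.
  set C := binomial _ _; set P := 2 ^ v; set x := 2 * T.+1; clearbody C P x; nia.
rewrite -(@Gauss_dvdr _ (b * (n + T.+1) * (n - T.+1))); last first.
  by rewrite coprime_pexpl // coprime2n !oddM ob oN ow.
have eX : (2 * T.+1).+2 = 2 ^ s.+1 * J.
  rewrite /s !expnS -!mulnA; move: hT; move: (2 ^ s' * J) => Q; lia.
rewrite H2 -!mulnA; apply: dvdn_mull; apply: dvdn_mulr.
by rewrite eX dvdn_mulr.
Qed.

Local Open Scope ring_scope.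

Lemma cm2_cc n T : cm2 n T.+1 = (-1) ^+ (n + T.+1) * (cc n T)%:R.
Proof.
rewrite /cm2 -mulrA; congr (_ * _).
have hN : ((n + T.+1)%:R : rat) != 0 by rewrite pnatr_eq0 addnS.
apply: (mulfI hN); rewrite -natrM ccN natrM.
rewrite mulrA.
rewrite [_ * (_ / _)]mulrC divfK // natrM.
by rewrite natrM.
Qed.

Lemma cong_of n T m : (m %| cc n T)%N -> rat_cong0 (cm2 n T.+1) m.
Proof.
case/dvdnP => k hk; exists ((-1) ^+ (n + T.+1) * k%:Z).
rewrite cm2_cc hk -signr_odd.
rewrite -[in RHS]signr_odd; case: (odd _).
  rewrite /= !expr1 !mulN1r mulrN rmorphN /= intrM natrM mulrC.
  by congr (- _); rewrite mulrC.
by rewrite /= !expr0 !mul1r intrM natrM mulrC.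
Qed.


Local Close Scope ring_scope.

Theorem mainTheorem9 :
  (forall (s J n : nat), (1 <= s)%N -> (1 <= J)%N -> ~~ odd n ->
     rat_cong0 (cm2 n (2 ^ s * J - 1)) (2 ^ s.+1)) /\
  (forall (J n : nat), n %% 27 != 13 -> n %% 27 != 14 ->
     rat_cong0 (cm2 n (27 * J + 13)) 3) /\
  (forall (J n : nat), (1 <= J)%N -> n %% 27 != 1 -> n %% 27 != 26 ->
     rat_cong0 (cm2 n (27 * J - 1)) 3).
Proof.
split; [|split].
- move=> s J n hs hJ hn.
  have e : (2 ^ s * J - 1 = (2 ^ s * J - 2).+1)%N.
    have : (2 <= 2 ^ s * J)%N.
      case: s hs => // s' _; rewrite expnS -mulnA.
      have : (0 < 2 ^ s' * J)%N by rewrite muln_gt0 expn_gt0 hJ.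
      move: (2 ^ s' * J)%N => Q; lia.
    move: (2 ^ s * J)%N => Q; lia.
  by rewrite e; apply: cong_of; apply: part1.
- move=> J n h1 h2.
  rewrite (_ : (27 * J + 13 = (27 * J + 12).+1)%N); last by lia.
  by apply: cong_of; apply: part2.
- move=> J n hJ h1 h2.
  rewrite (_ : (27 * J - 1 = (27 * J - 2).+1)%N); last by lia.
  by apply: cong_of; apply: part3.
Qed.
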